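(* Let $\mathbf p=(p_1,p_2,p_3,p_4)$ be an agreeable memory-one strategy for X with $\mathbf p\neq(1,1,0,0)$. Then $\mathbf p$ is of Nash type if and only if $$\frac{T-R}{R-S}\,p_3\le 1-p_2\qquad\text{and}\qquad \frac{T-R}{R-P}\,p_4\le 1-p_2 .$$ Moreover, $\mathbf p$ is good if and only if both of these inequalities are strict.
   Context: Iterated Prisoner's Dilemma: payoffs $T>R>P>S$ with $2R>T+S$; outcomes of a round are ordered $cc,cd,dc,dd$ (first letter X's play, second Y's; $c$ = cooperate, $d$ = defect); payoff vectors $\mathbf S_X=(R,S,T,P)$, $\mathbf S_Y=(R,T,S,P)$. A memory-one strategy for X is $\mathbf p=(p_1,p_2,p_3,p_4)\in[0,1]^4$, where $p_i$ is the probability that X plays $c$ in the next round given that the current round had the $i$-th outcome. A strategy pattern for Y is an arbitrary (possibly randomized and history-dependent) rule for Y's play in each round. Given initial plays and the rules used, let $\mathbf v^n$ be the probability distribution of the outcome of round $n$; a limit distribution is any limit point $\mathbf v$ of the Cesàro averages $\frac1n\sum_{k=1}^n\mathbf v^k$, and the associated expected payoffs are $s_X=\langle\mathbf v\cdot\mathbf S_X\rangle$, $s_Y=\langle\mathbf v\cdot\mathbf S_Y\rangle$. $\mathbf p$ is agreeable if $p_1=1$. $\mathbf p$ is of Nash type if it is agreeable and, for every strategy pattern of Y and every associated limit distribution, $s_Y\ge R$ implies $s_Y=R$. $\mathbf p$ is good if it is agreeable and, for every strategy pattern of Y and every associated limit distribution, $s_Y\ge R$ implies $s_Y=s_X=R$.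 *)

(* Defs.v *)
From mathcomp Require Import all_boot all_order all_algebra.
From mathcomp Require Import reals.
Set Implicit Arguments. Unset Strict Implicit. Unset Printing Implicit Defensive.
Import Order.TTheory GRing.Theory Num.Theory.
Local Open Scope ring_scope.

(* Outcomes of a round, ordered cc, cd, dc, dd  as 0,1,2,3
   (first letter = X's play, second = Y's play). *)
Definition outcome := 'I_4.

Definition x_coop (o : outcome) : bool := (val o < 2)%N.
Definition y_coop (o : outcome) : bool := (val o == 0%N) || (val o == 2%N).

Section IPD.
Variable R : realType.

Definition vec4 (a1 a2 a3 a4 : R) (o : outcome) : R :=
  match val o with 0 => a1 | 1 => a2 | 2 => a3 | _ => a4 end.

(* Probability of a given play (b = true: cooperate) when cooperation
   has probability q. *)
Definition fac (q : R) (b : bool) : R := if b then q else 1 - q.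

(* A strategy pattern for Y: y h = probability that Y cooperates in the next
   round given the full history h of previous outcomes (most recent first);
   y [::] is Y's (possibly randomized) initial play. *)
Definition valid_pattern (y : seq outcome -> R) : Prop :=
  forall h, 0 <= y h <= 1.

(* Probability of the history h (most recent outcome first), when X plays c
   initially with probability x0 and afterwards uses the memory-one strategy
   p, and Y uses the pattern y (plays conditionally independent given the
   past). *)
Definition step (x0 : R) (p : outcome -> R) (y : seq outcome -> R)
  (past : seq outcome) (o : outcome) : R :=
  match past with
  | [::] => fac x0 (x_coop o) * fac (y [::]) (y_coop o)
  | o' :: _ => fac (p o') (x_coop o) * fac (y past) (y_coop o)
  end.

Fixpoint hprob (x0 : R) (p : outcome -> R) (y : seq outcome -> R)
  (h : seq outcome) : R :=
  match h with
  | [::] => 1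
  | o :: h' => hprob x0 p y h' * step x0 p y h' o
  end.

(* v^n : distribution of the outcome of round n (n >= 1). *)
Definition vdist (x0 : R) (p : outcome -> R) (y : seq outcome -> R)
  (n : nat) (o : outcome) : R :=
  \sum_(h : n.-tuple outcome | ohead h == Some o) hprob x0 p y h.

Definition cesaro (x0 : R) (p : outcome -> R) (y : seq outcome -> R)
  (n : nat) (o : outcome) : R :=
  (n%:R)^-1 * \sum_(1 <= k < n.+1) vdist x0 p y k o.

Definition limit_dist (x0 : R) (p : outcome -> R) (y : seq outcome -> R)
  (v : outcome -> R) : Prop :=
  forall eps : R, 0 < eps -> forall N : nat, exists n : nat,
    (N <= n)%N /\ forall o, `|cesaro x0 p y n o - v o| < eps.

Definition payX (T Rw P S : R) (v : outcome -> R) : R :=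
  \sum_(o : outcome) v o * vec4 Rw S T P o.
Definition payY (T Rw P S : R) (v : outcome -> R) : R :=
  \sum_(o : outcome) v o * vec4 Rw T S P o.

Definition agreeable (p : outcome -> R) : Prop := p ord0 = 1.

(* Quantification "for every strategy pattern of Y and every associated
   limit distribution" also ranges over X's (possibly randomized) initial
   play x0. *)
Definition nash_type (T Rw P S : R) (p : outcome -> R) : Prop :=
  agreeable p /\
  forall (x0 : R) (y : seq outcome -> R) (v : outcome -> R),
    0 <= x0 <= 1 -> valid_pattern y -> limit_dist x0 p y v ->
    Rw <= payY T Rw P S v -> payY T Rw P S v = Rw.

Definition good (T Rw P S : R) (p : outcome -> R) : Prop :=
  agreeable p /\
  forall (x0 : R) (y : seq outcome -> R) (v : outcome -> R),
    0 <= x0 <= 1 -> valid_pattern y -> limit_dist x0 p y v ->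
    Rw <= payY T Rw P S v ->
    payY T Rw P S v = Rw /\ payX T Rw P S v = Rw.

End IPD.

(* Main.v *)
Require Import Defs.
From mathcomp Require Import all_boot all_order all_algebra.
From mathcomp Require Import reals.
From mathcomp Require Import ring lra.
Import Order.TTheory GRing.Theory Num.Theory.
Local Open Scope ring_scope.
Set Implicit Arguments. Unset Strict Implicit.

Notation o0 := (@Ordinal 4 0 isT).
Notation o1 := (@Ordinal 4 1 isT).
Notation o2 := (@Ordinal 4 2 isT).
Notation o3 := (@Ordinal 4 3 isT).

Lemma v4_0 (R : realType) (a b c d : R) h : vec4 a b c d (@Ordinal 4 0 h) = a. Proof. by []. Qed.
Lemma v4_1 (R : realType) (a b c d : R) h : vec4 a b c d (@Ordinal 4 1 h) = b. Proof. by []. Qed.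
Lemma v4_2 (R : realType) (a b c d : R) h : vec4 a b c d (@Ordinal 4 2 h) = c. Proof. by []. Qed.
Lemma v4_3 (R : realType) (a b c d : R) h : vec4 a b c d (@Ordinal 4 3 h) = d. Proof. by []. Qed.
Ltac v4 := rewrite ?v4_0 ?v4_1 ?v4_2 ?v4_3 /=.

Lemma sum4 (R : realType) (F : outcome -> R) :
  \sum_(o : outcome) F o = F o0 + F o1 + F o2 + F o3.
Proof.
rewrite !big_ord_recl big_ord0 addr0 !addrA.
by congr (_ + _ + _ + _); congr F; apply: val_inj.
Qed.

Lemma tuple_sum_cons (R : realType) (n : nat) (F : n.+1.-tuple outcome -> R) :
  \sum_(t : n.+1.-tuple outcome) F t =
  \sum_(t : n.-tuple outcome) \sum_(o : outcome) F (cons_tuple o t).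
Proof.
rewrite exchange_big pair_big /=.
rewrite (reindex (fun pr : outcome * n.-tuple outcome => cons_tuple pr.1 pr.2)) //=.
exists (fun t => (thead t, behead_tuple t)) => [[a t] _ | t _] /=.
  by rewrite theadE; congr pair; apply: val_inj.
by rewrite [in RHS](tuple_eta t); apply: val_inj.
Qed.

Lemma tuple_sum0 (R : realType) (F : 0.-tuple outcome -> R) :
  \sum_(t : 0.-tuple outcome) F t = F [tuple].
Proof. by rewrite (big_pred1 [tuple]) // => t; apply/esym/eqP; exact: tuple0. Qed.

Definition xind (R : realType) (o : outcome) : R := if x_coop o then 1 else 0.

Lemma fac_sum (R : realType) (a b : R) :
  \sum_(o : outcome) fac a (x_coop o) * fac b (y_coop o) = 1.
Proof. rewrite sum4 /=; ring. Qed.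

Lemma fac_xsum (R : realType) (a b : R) :
  \sum_(o : outcome) xind R o * (fac a (x_coop o) * fac b (y_coop o)) = a.
Proof. rewrite sum4 /xind /=; ring. Qed.

Lemma step_sum (R : realType) (x0 : R) (p : outcome -> R) (y : seq outcome -> R) h :
  \sum_(o : outcome) step (R:=R) x0 p y h o = 1.
Proof. by case: h => [|o' h]; rewrite /= fac_sum. Qed.

Lemma vdistS (R : realType) (x0 : R) (p : outcome -> R) (y : seq outcome -> R) n o :
  vdist (R:=R) x0 p y n.+1 o = \sum_(t : n.-tuple outcome) hprob x0 p y (o :: t).
Proof.
rewrite /vdist big_mkcond tuple_sum_cons; apply: eq_bigr => t _.
rewrite (bigD1 o) //= eqxx big1 ?addr0 // => o' ne.
rewrite /=; case: eqP => // [[e]]; by rewrite e eqxx in ne.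
Qed.

Lemma sum_hprob (R : realType) (x0 : R) (p : outcome -> R) (y : seq outcome -> R) n :
  \sum_(t : n.-tuple outcome) hprob (R:=R) x0 p y t = 1.
Proof.
elim: n => [|n IH]; first by rewrite tuple_sum0.
rewrite tuple_sum_cons -[RHS]IH; apply: eq_bigr => t _ /=.
by rewrite -mulr_sumr step_sum mulr1.
Qed.

Lemma vdist_sum (R : realType) (x0 : R) (p : outcome -> R) (y : seq outcome -> R) n :
  \sum_(o : outcome) vdist (R:=R) x0 p y n.+1 o = 1.
Proof.
under eq_bigr do rewrite vdistS.
rewrite exchange_big -[RHS](sum_hprob x0 p y n); apply: eq_bigr => t _ /=.
by rewrite -mulr_sumr step_sum mulr1.
Qed.

Lemma fac_ge0 (R : realType) (a : R) b : 0 <= a <= 1 -> 0 <= fac a b.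
Proof. by case/andP=> h0 h1; case: b => /=; lra. Qed.

Lemma hprob_ge0 (R : realType) (x0 : R) (p : outcome -> R) (y : seq outcome -> R) h :
  0 <= x0 <= 1 -> (forall o, 0 <= p o <= 1) -> valid_pattern y ->
  0 <= hprob (R:=R) x0 p y h.
Proof.
move=> hx hp hy; elim: h => [|o h IH] //=.
apply: mulr_ge0 => //; case: h {IH} => [|o' h] /=;
  apply: mulr_ge0; apply: fac_ge0 => //.
Qed.

Lemma vdist_ge0 (R : realType) (x0 : R) (p : outcome -> R) (y : seq outcome -> R) n o :
  0 <= x0 <= 1 -> (forall o, 0 <= p o <= 1) -> valid_pattern y ->
  0 <= vdist (R:=R) x0 p y n o.
Proof. by move=> *; apply: sumr_ge0 => t _; apply: hprob_ge0. Qed.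

Lemma vdist_rec_gen (R : realType) (x0 : R) (p : outcome -> R) (y : seq outcome -> R) k o' :
  vdist (R:=R) x0 p y k.+2 o' =
  \sum_(o : outcome) \sum_(t : k.-tuple outcome)
     hprob x0 p y (o :: t) * (fac (p o) (x_coop o') * fac (y (o :: t)) (y_coop o')).
Proof.
rewrite vdistS tuple_sum_cons exchange_big; apply: eq_bigr => o _.
by apply: eq_bigr => t _.
Qed.

Lemma vdist_rec (R : realType) (x0 : R) (p : outcome -> R) (y : seq outcome -> R) k (g : outcome -> R) o' :
  (forall o (t : k.-tuple outcome), y (o :: t) = g o) ->
  vdist (R:=R) x0 p y k.+2 o' =
  \sum_(o : outcome) vdist x0 p y k.+1 o * (fac (p o) (x_coop o') * fac (g o) (y_coop o')).
Proof.
move=> hy; rewrite vdist_rec_gen; apply: eq_bigr => o _.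
rewrite vdistS mulr_suml; apply: eq_bigr => t _.
by rewrite hy.
Qed.

Definition cX (R : realType) (x0 : R) (p : outcome -> R) (y : seq outcome -> R) n :=
  \sum_(o : outcome) vdist (R:=R) x0 p y n o * xind R o.

Lemma cX_step (R : realType) (x0 : R) (p : outcome -> R) (y : seq outcome -> R) k :
  cX (R:=R) x0 p y k.+2 = \sum_(o : outcome) vdist x0 p y k.+1 o * p o.
Proof.
rewrite /cX.
under eq_bigr do rewrite vdist_rec_gen mulr_suml.
rewrite exchange_big; apply: eq_bigr => o _.
rewrite vdistS mulr_suml.
under eq_bigr do rewrite mulr_suml.
rewrite exchange_big; apply: eq_bigr => t _.
rewrite -[p o in RHS](fac_xsum (p o) (y (o :: t))) mulr_sumr.
by apply: eq_bigr => o' _; ring.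
Qed.

Lemma cX_bound (R : realType) (x0 : R) (p : outcome -> R) (y : seq outcome -> R) n :
  0 <= x0 <= 1 -> (forall o, 0 <= p o <= 1) -> valid_pattern y ->
  0 <= cX (R:=R) x0 p y n.+1 <= 1.
Proof.
move=> hx hp hy; apply/andP; split.
  apply: sumr_ge0 => o _; apply: mulr_ge0; first exact: vdist_ge0.
  by rewrite /xind; case: x_coop.
rewrite -(vdist_sum x0 p y n); apply: ler_sum => o _.
have := vdist_ge0 n.+1 o hx hp hy.
rewrite /xind; case: x_coop; rewrite ?mulr1 ?mulr0 //.
Qed.

Definition Lf (R : realType) (p : outcome -> R) (w : outcome -> R) :=
  \sum_(o : outcome) w o * (p o - xind R o).

Lemma ces_lin (R : realType) (x0 : R) (p : outcome -> R) (y : seq outcome -> R) n (c : outcome -> R) :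
  \sum_(o : outcome) cesaro x0 p y n o * c o =
  (n%:R)^-1 * \sum_(1 <= k < n.+1) \sum_(o : outcome) vdist x0 p y k o * c o.
Proof.
rewrite /cesaro exchange_big mulr_sumr; apply: eq_bigr => o _.
by rewrite -mulrA mulr_suml.
Qed.

Lemma sumL_vdist (R : realType) (x0 : R) (p : outcome -> R) (y : seq outcome -> R) n :
  \sum_(1 <= k < n.+1) Lf p (vdist (R:=R) x0 p y k) = cX x0 p y n.+1 - cX x0 p y 1.
Proof.
apply: telescope_sumr_eq => // k /andP[k1 _].
case: k k1 => // j _.
rewrite cX_step /Lf /cX -sumrB; apply: eq_bigr => o _; ring.
Qed.

Lemma lim_close (R : realType) (x0 : R) (p : outcome -> R) (y : seq outcome -> R) (v c : outcome -> R) :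
  limit_dist x0 p y v -> (forall o, `|c o| <= 1) ->
  forall eps, 0 < eps -> forall N, exists n, (N <= n)%N /\
    `|\sum_(o : outcome) v o * c o - \sum_(o : outcome) cesaro x0 p y n o * c o| <= eps.
Proof.
move=> hl hc eps he N.
have he4 : 0 < eps / 4 by apply: divr_gt0.
have [n [hn hclose]] := hl _ he4 N.
exists n; split => //.
rewrite -sumrB; apply: le_trans (ler_norm_sum _ _ _) _.
have -> : eps = \sum_(o : outcome) eps / 4 by rewrite sum4; field.
apply: ler_sum => o _.
rewrite -mulrBl normrM -[eps / 4]mulr1 distrC.
apply: ler_pM => //; first exact: ltW.
Qed.

Lemma eq_of_close (R : realType) (x z : R) :
  (forall eps, 0 < eps -> `|x - z| <= eps) -> x = z.
Proof.
move=> h; apply/eqP; rewrite -subr_eq0 -normr_eq0; apply/eqP.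
apply: le_anti; rewrite normr_ge0 andbT.
apply/ler_addgt0Pr => e he; rewrite add0r; exact: h.
Qed.

Lemma ces_sum (R : realType) (x0 : R) (p : outcome -> R) (y : seq outcome -> R) n :
  \sum_(o : outcome) cesaro (R:=R) x0 p y n.+1 o * 1 = 1.
Proof.
rewrite ces_lin.
rewrite (eq_big_nat _ _ (F2 := fun _ => 1)); last first.
  move=> k /andP[k1 _]; case: k k1 => // j _.
  by under eq_bigr do rewrite mulr1; rewrite vdist_sum.
by rewrite sumr_const_nat subn1 /= mulVf // pnatr_eq0.
Qed.

Lemma lim_sum (R : realType) (x0 : R) (p : outcome -> R) (y : seq outcome -> R) (v : outcome -> R) :
  limit_dist x0 p y v -> \sum_(o : outcome) v o = 1.
Proof.
move=> hl; under eq_bigr do rewrite -[v _]mulr1.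
apply: eq_of_close => eps he.
have h1 : forall o : outcome, `|(fun _ : outcome => (1:R)) o| <= 1 by move=> o; rewrite normr1.
have [n [hn hcl]] := lim_close hl h1 he 1.
case: n hn hcl => // n _; by rewrite ces_sum.
Qed.

Lemma inv_small (R : realType) (eps : R) (n : nat) :
  0 < eps -> ((Num.truncn (2 / eps)).+1 <= n)%N -> (n%:R)^-1 <= eps / 2.
Proof.
move=> he hn.
have h1 := truncnS_gt (2 / eps).
have h2 : ((Num.truncn (2 / eps)).+1%:R <= n%:R :> R) by rewrite ler_nat.
have h3 : 2 / eps < n%:R by apply: lt_le_trans h2.
rewrite ltr_pdivrMr // in h3.
have hn0 : (0 < n%:R :> R) by rewrite ltr0n; apply: leq_trans hn.
rewrite -[_^-1]mulr1 ler_pdivrMl // mulrA ler_pdivlMr // mul1r; exact: ltW.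
Qed.

Lemma lim_akin (R : realType) (x0 : R) (p : outcome -> R) (y : seq outcome -> R) (v : outcome -> R) :
  0 <= x0 <= 1 -> (forall o, 0 <= p o <= 1) -> valid_pattern y ->
  limit_dist x0 p y v -> Lf p v = 0.
Proof.
move=> hx hp hy hl; apply: eq_of_close => eps he.
have hc : forall o, `|(fun o => p o - xind R o) o| <= 1.
  move=> o /=; have := hp o; rewrite /xind ler_norml; case: x_coop => /andP[? ?];
  apply/andP; split; lra.
have he2 : 0 < eps / 2 by apply: divr_gt0.
have [n [hn hcl]] := lim_close hl hc he2 (Num.truncn (2 / eps)).+1.
have hinv := inv_small he hn.
case: n hn hcl hinv => // n _ hcl hinv.
have e : \sum_(o : outcome) cesaro x0 p y n.+1 o * (p o - xind R o) =
   (n.+1%:R)^-1 * (cX x0 p y n.+1.+1 - cX x0 p y 1).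
  by rewrite ces_lin -sumL_vdist.
rewrite e in hcl.
have hb : `|(n.+1%:R : R)^-1 * (cX x0 p y n.+2 - cX x0 p y 1)| <= (n.+1%:R)^-1.
  rewrite normrM ger0_norm ?invr_ge0 ?ler0n // -[X in _ <= X]mulr1.
  apply: ler_pM => //; first by rewrite invr_ge0 ler0n.
  have := cX_bound n.+1 hx hp hy; have := cX_bound 0 hx hp hy.
  move=> /andP[? ?] /andP[? ?]; rewrite ler_norml; apply/andP; split; lra.
rewrite subr0.
have := ler_normD (Lf p v - (n.+1%:R)^-1 * (cX x0 p y n.+2 - cX x0 p y 1))
                 ((n.+1%:R)^-1 * (cX x0 p y n.+2 - cX x0 p y 1)).
rewrite subrK => h.
apply: le_trans h _.
rewrite /Lf; apply: le_trans (lerD hcl hb) _.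
move: hinv; move: (n.+1%:R^-1) => t ht; lra.
Qed.

Lemma ces_ge0 (R : realType) (x0 : R) (p : outcome -> R) (y : seq outcome -> R) n o :
  0 <= x0 <= 1 -> (forall o, 0 <= p o <= 1) -> valid_pattern y ->
  0 <= cesaro (R:=R) x0 p y n o.
Proof.
move=> hx hp hy; apply: mulr_ge0; first by rewrite invr_ge0 ler0n.
by apply: sumr_ge0 => k _; apply: vdist_ge0.
Qed.

Lemma lim_ge0 (R : realType) (x0 : R) (p : outcome -> R) (y : seq outcome -> R) (v : outcome -> R) o :
  0 <= x0 <= 1 -> (forall o, 0 <= p o <= 1) -> valid_pattern y ->
  limit_dist x0 p y v -> 0 <= v o.
Proof.
move=> hx hp hy hl; rewrite leNgt; apply/negP => hv.
have he : 0 < - v o by rewrite oppr_gt0.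
have [n [_ hcl]] := hl _ he 0%N.
have := hcl o; have := ces_ge0 n o hx hp hy.
rewrite ltr_norml => ? /andP[? ?]; lra.
Qed.

Lemma ces_stat (R : realType) (x0 : R) (p : outcome -> R) (y : seq outcome -> R)
  (pi : outcome -> R) n o :
  (forall k o, vdist x0 p y k.+2 o = pi o) ->
  cesaro x0 p y n.+1 o - pi o = (n.+1%:R)^-1 * (vdist x0 p y 1 o - pi o).
Proof.
move=> hs; rewrite /cesaro big_ltn //.
rewrite (eq_big_nat _ _ (F2 := fun _ => pi o)); last first.
  by move=> k /andP[k2 _]; case: k k2 => [|[|k]] // _; rewrite hs.
rewrite sumr_const_nat subSS subn1 /= -[pi o *+ _]mulr_natr -natr1.
field; by rewrite natr1 pnatr_eq0.
Qed.

Lemma lim_stat (R : realType) (x0 : R) (p : outcome -> R) (y : seq outcome -> R)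
  (pi : outcome -> R) :
  (forall k o, vdist x0 p y k.+2 o = pi o) -> limit_dist x0 p y pi.
Proof.
move=> hs eps he N.
set C := \sum_(o : outcome) `|vdist x0 p y 1 o - pi o|.
have hC : 0 <= C by apply: sumr_ge0.
have h1 := truncnS_gt (C / eps).
set m := (Num.truncn (C / eps)).+1 in h1.
exists (N + m)%N; split; first exact: leq_addr.
have -> : (N + m = (N + m).-1.+1)%N by rewrite prednK // addn_gt0 /m orbT.
move=> o; rewrite ces_stat //.
rewrite normrM ger0_norm ?invr_ge0 ?ler0n //.
have hd : `|vdist x0 p y 1 o - pi o| <= C.
  by rewrite /C (bigD1 o) //= lerDl; apply: sumr_ge0.
have hm : (m%:R <= ((N + m).-1.+1)%:R :> R).
  by rewrite ler_nat prednK ?leq_addl // addn_gt0 /m orbT.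
move: hm; move: ((N + m).-1.+1) => k hm.
have hk : (0 < k%:R :> R) by apply: lt_le_trans hm; apply: le_lt_trans h1; apply: divr_ge0 => //; exact: ltW.
rewrite ltr_pdivrMl //.
rewrite ltr_pdivrMr // in h1.
apply: le_lt_trans hd _; apply: lt_le_trans h1 _.
by rewrite ler_pM2r.
Qed.

Lemma vec4_range (R : realType) (p1 p2 p3 p4 : R) :
  0 <= p1 <= 1 -> 0 <= p2 <= 1 -> 0 <= p3 <= 1 -> 0 <= p4 <= 1 ->
  forall o, 0 <= vec4 p1 p2 p3 p4 o <= 1.
Proof. by move=> h1 h2 h3 h4; case=> [[|[|[|[|k]]]] ho]. Qed.

Lemma facts (R : realType) (p1 p2 p3 p4 : R) (x0 : R) (y : seq outcome -> R)
  (v : outcome -> R) :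
  0 <= p1 <= 1 -> 0 <= p2 <= 1 -> 0 <= p3 <= 1 -> 0 <= p4 <= 1 ->
  0 <= x0 <= 1 -> valid_pattern y -> limit_dist x0 (vec4 p1 p2 p3 p4) y v ->
  [/\ v o0 + v o1 + v o2 + v o3 = 1,
      v o0 * (p1 - 1) + v o1 * (p2 - 1) + v o2 * p3 + v o3 * p4 = 0,
      0 <= v o1, 0 <= v o2 & 0 <= v o3].
Proof.
move=> h1 h2 h3 h4 hx hy hl.
have hp := vec4_range h1 h2 h3 h4.
split.
- by rewrite -sum4; exact: lim_sum hl.
- by have := lim_akin hx hp hy hl; rewrite /Lf sum4 /xind /= !subr0.
- exact: lim_ge0 hl.
- exact: lim_ge0 hl.
- exact: lim_ge0 hl.
Qed.

Lemma payY4 (R : realType) (T Rw P S : R) v :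
  payY T Rw P S v = v o0 * Rw + v o1 * T + v o2 * S + v o3 * P.
Proof. by rewrite /payY sum4. Qed.

Lemma payX4 (R : realType) (T Rw P S : R) v :
  payX T Rw P S v = v o0 * Rw + v o1 * S + v o2 * T + v o3 * P.
Proof. by rewrite /payX sum4. Qed.

Lemma vdist1 (R : realType) (x0 : R) (p : outcome -> R) (y : seq outcome -> R) o :
  vdist x0 p y 1 o = fac x0 (x_coop o) * fac (y [::]) (y_coop o).
Proof. by rewrite vdistS tuple_sum0 /= mul1r. Qed.

Definition yspec (R : realType) (y0 r1 q1 : R) (h : seq outcome) : R :=
  match h with
  | [::] => y0
  | [:: o] => vec4 r1 1 1 1 o
  | o :: _ => vec4 q1 1 1 1 o
  end.

Lemma special_chain (R : realType) (p2 p3 p4 : R) :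
  0 <= p2 <= 1 -> 0 <= p3 <= 1 -> 0 <= p4 <= 1 -> 0 < 1 + p3 - p2 ->
  exists x0 y, [/\ 0 <= x0 <= 1, valid_pattern y &
    limit_dist x0 (vec4 1 p2 p3 p4) y
      (vec4 (1 / (2 + p3 - p2)) (p3 / (2 + p3 - p2)) ((1 - p2) / (2 + p3 - p2)) 0)].
Proof.
move=> h2 h3 h4 hE.
have hD : 0 < 2 + p3 - p2 by lra.
have nD : 2 + p3 - p2 != 0 by rewrite gt_eqF.
have nE : 1 + p3 - p2 != 0 by rewrite gt_eqF.
set r1 := (1 - p2) / (1 + p3 - p2).
set y0 := (1 + p3 - p2) / (2 + p3 - p2).
have hr1 : 0 <= r1 <= 1.
  apply/andP; split; first by apply: divr_ge0; lra.
  by rewrite ler_pdivrMr // mul1r; lra.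
have hy0 : 0 <= y0 <= 1.
  apply/andP; split; first by apply: divr_ge0; lra.
  by rewrite ler_pdivrMr // mul1r; lra.
exists 1, (yspec y0 r1 (1 - p3)); split.
- by rewrite ler01 lexx.
- have h1 : 0 <= (1:R) <= 1 by rewrite ler01 lexx.
  have hq : 0 <= 1 - p3 <= 1 by apply/andP; split; lra.
  case=> [|o [|o' h]] /=; first exact: hy0.
    exact: vec4_range.
  exact: vec4_range.
apply: lim_stat.
elim=> [|k IH] o'.
  rewrite (@vdist_rec _ _ _ _ _ (vec4 r1 1 1 1)); last by move=> o t; rewrite [t]tuple0.
  rewrite sum4 !vdist1 /= /r1 /y0.
  case: o' => [[|[|[|[|k]]]] ho] //=; v4; field; rewrite ?nD ?nE //.
rewrite (@vdist_rec _ 1 (vec4 1 p2 p3 p4) (yspec y0 r1 (1 - p3)) k.+1 (vec4 (1 - p3) 1 1 1)); last by move=> o [[|a s] hs].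
rewrite sum4 !IH /=.
case: o' => [[|[|[|[|j]]]] ho] //=; v4; field; rewrite ?nD ?nE //.
Qed.

Lemma iid_chain (R : realType) (p2 p3 p4 : R) :
  0 <= p2 <= 1 -> 0 <= p3 <= 1 -> 0 <= p4 <= 1 -> 0 < 1 - p2 + p4 ->
  exists x0 y, [/\ 0 <= x0 <= 1, valid_pattern y &
    limit_dist x0 (vec4 1 p2 p3 p4) y
      (vec4 0 (p4 / (1 - p2 + p4)) 0 (1 - p4 / (1 - p2 + p4)))].
Proof.
move=> h2 h3 h4 hD.
have nD : 1 - p2 + p4 != 0 by rewrite gt_eqF.
set a := p4 / (1 - p2 + p4).
have ha : 0 <= a <= 1.
  apply/andP; split; first by apply: divr_ge0; lra.
  by rewrite ler_pdivrMr // mul1r; lra.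
exists a, (fun _ => 0); split => //.
  by move=> h; rewrite lexx ler01.
have hs : forall k o, vdist a (vec4 1 p2 p3 p4) (fun _ => 0) k.+1 o =
            vec4 0 a 0 (1 - a) o.
  elim=> [|k IH] o'.
    by rewrite vdist1; case: o' => [[|[|[|[|k]]]] ho] //=; v4; ring.
  rewrite (@vdist_rec _ a (vec4 1 p2 p3 p4) (fun _ => 0) k (fun _ => 0)) //.
  rewrite sum4 !IH /=.
  case: o' => [[|[|[|[|j]]]] ho] //=; v4; rewrite /a; field; rewrite ?nD //.
by apply: lim_stat => k o; rewrite hs.
Qed.

Lemma core (R : realType) (T Rw P S p2 p3 p4 v1 v2 v3 v4 : R) :
  Rw < T -> P < Rw -> S < P -> 0 <= p2 <= 1 -> 0 <= p3 -> 0 <= p4 ->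
  v1 + v2 + v3 + v4 = 1 ->
  v1 * (1 - 1) + v2 * (p2 - 1) + v3 * p3 + v4 * p4 = 0 ->
  0 <= v2 -> 0 <= v3 -> 0 <= v4 ->
  (T - Rw) * p3 <= (1 - p2) * (Rw - S) -> (T - Rw) * p4 <= (1 - p2) * (Rw - P) ->
  ~ (p2 = 1 /\ p3 = 0 /\ p4 = 0) ->
  Rw <= v1 * Rw + v2 * T + v3 * S + v4 * P ->
  v1 * Rw + v2 * T + v3 * S + v4 * P = Rw /\
  ((T - Rw) * p3 < (1 - p2) * (Rw - S) -> (T - Rw) * p4 < (1 - p2) * (Rw - P) ->
   v1 * Rw + v2 * S + v3 * T + v4 * P = Rw).
Proof.
move=> hTR hRP hPS /andP[hp20 hp21] hp3 hp4 hsum hak hv2 hv3 hv4 hA hB hne hge.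
set A := (T - Rw) * p3 - (1 - p2) * (Rw - S).
set B := (T - Rw) * p4 - (1 - p2) * (Rw - P).
set D := v2 * (T - Rw) - v3 * (Rw - S) - v4 * (Rw - P).
have hk : v2 * (1 - p2) = v3 * p3 + v4 * p4 by lra.
have eD : v1 * Rw + v2 * T + v3 * S + v4 * P - Rw = D.
  have -> : v1 = 1 - v2 - v3 - v4 by lra.
  rewrite /D; ring.
have hid : (1 - p2) * D = v3 * A + v4 * B.
  have -> : (1 - p2) * D = (T - Rw) * (v2 * (1 - p2)) - (1 - p2) * (v3 * (Rw - S) + v4 * (Rw - P)).
    by rewrite /D; ring.
  by rewrite hk /A /B; ring.
have hA0 : A <= 0 by rewrite /A; lra.
have hB0 : B <= 0 by rewrite /B; lra.
have h3A : v3 * A <= 0 by apply: mulr_ge0_le0.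
have h4B : v4 * B <= 0 by apply: mulr_ge0_le0.
have hD0 : 0 <= D by lra.
have hp2 : p2 < 1.
  rewrite lt_neqAle hp21 andbT; apply/eqP => e2.
  apply: hne; split => //.
  rewrite e2 subrr mul0r in hA hB.
  have hTR' : 0 < T - Rw by rewrite subr_gt0.
  have h3 : p3 <= 0 by rewrite -(pmulr_rle0 _ hTR') ; exact: hA.
  have h4 : p4 <= 0 by rewrite mul0r in hB; rewrite -(pmulr_rle0 _ hTR') ; exact: hB.
  by split; apply: le_anti; rewrite ?h3 ?h4.
have hDz : D = 0.
  apply: le_anti; rewrite hD0 andbT.
  have : (1 - p2) * D <= 0 by lra.
  by rewrite pmulr_rle0 // subr_gt0.
split; first by lra.
move=> hAs hBs.
have hAn : A < 0 by rewrite /A; lra.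
have hBn : B < 0 by rewrite /B; lra.
have e0 : v3 * A + v4 * B = 0 by rewrite -hid hDz mulr0.
have e3 : v3 * A = 0 by lra.
have e4 : v4 * B = 0 by lra.
move/eqP: e3; rewrite mulf_eq0 (negbTE (ltr0_neq0 hAn)) orbF => /eqP e3.
move/eqP: e4; rewrite mulf_eq0 (negbTE (ltr0_neq0 hBn)) orbF => /eqP e4.
have e2 : v2 * (T - Rw) = 0 by rewrite /D e3 e4 in hDz; lra.
move/eqP: e2; rewrite mulf_eq0 subr_eq0 (gt_eqF hTR) orbF => /eqP e2.
have -> : v1 = 1 by lra.
rewrite e2 e3 e4; ring.
Qed.


Unset Implicit Arguments.
Set Strict Implicit.

Theorem theorem1p5 (R : realType) (T Rw P S : R)
  (hTR : Rw < T) (hRP : P < Rw) (hPS : S < P) (h2R : T + S < 2 * Rw)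
  (p1 p2 p3 p4 : R)
  (hp1 : 0 <= p1 <= 1) (hp2 : 0 <= p2 <= 1)
  (hp3 : 0 <= p3 <= 1) (hp4 : 0 <= p4 <= 1)
  (hagr : agreeable (vec4 p1 p2 p3 p4))
  (hne : (p1, p2, p3, p4) <> (1, 1, 0, 0)) :
  (nash_type T Rw P S (vec4 p1 p2 p3 p4) <->
     (T - Rw) / (Rw - S) * p3 <= 1 - p2 /\ (T - Rw) / (Rw - P) * p4 <= 1 - p2)
  /\
  (good T Rw P S (vec4 p1 p2 p3 p4) <->
     (T - Rw) / (Rw - S) * p3 < 1 - p2 /\ (T - Rw) / (Rw - P) * p4 < 1 - p2).
Proof.
have e1 : p1 = 1 := hagr.
subst p1.
have hpp : ~ (p2 = 1 /\ p3 = 0 /\ p4 = 0) by move=> [e2 [e3 e4]]; apply: hne; rewrite e2 e3 e4.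
have hRS : 0 < Rw - S by rewrite subr_gt0; apply: lt_trans hRP.
have hRP' : 0 < Rw - P by rewrite subr_gt0.
have hTR' : 0 < T - Rw by rewrite subr_gt0.
have eA : ((T - Rw) / (Rw - S) * p3 <= 1 - p2) = ((T - Rw) * p3 <= (1 - p2) * (Rw - S)).
  by rewrite mulrAC ler_pdivrMr.
have eB : ((T - Rw) / (Rw - P) * p4 <= 1 - p2) = ((T - Rw) * p4 <= (1 - p2) * (Rw - P)).
  by rewrite mulrAC ler_pdivrMr.
have eA' : ((T - Rw) / (Rw - S) * p3 < 1 - p2) = ((T - Rw) * p3 < (1 - p2) * (Rw - S)).
  by rewrite mulrAC ltr_pdivrMr.
have eB' : ((T - Rw) / (Rw - P) * p4 < 1 - p2) = ((T - Rw) * p4 < (1 - p2) * (Rw - P)).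
  by rewrite mulrAC ltr_pdivrMr.
rewrite eA eB eA' eB'.
case/andP: hp2 => hp20 hp21; case/andP: hp3 => hp30 hp31; case/andP: hp4 => hp40 hp41.
have hp2r : 0 <= p2 <= 1 by rewrite hp20.
have hp3r : 0 <= p3 <= 1 by rewrite hp30.
have hp4r : 0 <= p4 <= 1 by rewrite hp40.
have hfacts : forall (x0 : R) (y : seq outcome -> R) (v : outcome -> R), 0 <= x0 <= 1 -> valid_pattern y ->
    limit_dist x0 (vec4 1 p2 p3 p4) y v ->
    (T - Rw) * p3 <= (1 - p2) * (Rw - S) -> (T - Rw) * p4 <= (1 - p2) * (Rw - P) ->
    Rw <= payY T Rw P S v ->
    payY T Rw P S v = Rw /\
    ((T - Rw) * p3 < (1 - p2) * (Rw - S) -> (T - Rw) * p4 < (1 - p2) * (Rw - P) ->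
     payX T Rw P S v = Rw).
  move=> x0 y v hx hy hl hA hB.
  have [hs hak hv2 hv3 hv4] := facts hp1 hp2r hp3r hp4r hx hy hl.
  rewrite payY4 payX4 => hge.
  exact: core hTR hRP hPS hp2r hp30 hp40 hs hak hv2 hv3 hv4 hA hB hpp hge.
have hspec : 0 < 1 + p3 - p2 -> exists x0 y v, [/\ 0 <= x0 <= 1, valid_pattern y,
    limit_dist x0 (vec4 1 p2 p3 p4) y v,
    payY T Rw P S v = Rw + ((T - Rw) * p3 - (1 - p2) * (Rw - S)) / (2 + p3 - p2) &
    payX T Rw P S v = Rw + (p3 * (S - Rw) + (1 - p2) * (T - Rw)) / (2 + p3 - p2)].
  move=> hE.
  have [x0 [y [hx hy hl]]] := special_chain hp2r hp3r hp4r hE.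
  have nD : 2 + p3 - p2 != 0 by rewrite gt_eqF //; lra.
  exists x0, y; eexists; split; [exact: hx | exact: hy | exact: hl | |];
    rewrite ?payY4 ?payX4; v4; field; rewrite ?nD //.
have hiid : 0 < 1 - p2 + p4 -> exists x0 y v, [/\ 0 <= x0 <= 1, valid_pattern y,
    limit_dist x0 (vec4 1 p2 p3 p4) y v,
    payY T Rw P S v = Rw + ((T - Rw) * p4 - (1 - p2) * (Rw - P)) / (1 - p2 + p4) &
    payX T Rw P S v < Rw].
  move=> hE.
  have [x0 [y [hx hy hl]]] := iid_chain hp2r hp3r hp4r hE.
  have nD : 1 - p2 + p4 != 0 by rewrite gt_eqF.
  have ha : 0 <= p4 / (1 - p2 + p4) <= 1.
    apply/andP; split; first by apply: divr_ge0; lra.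
    by rewrite ler_pdivrMr // mul1r; lra.
  exists x0, y; eexists; split; [exact: hx | exact: hy | exact: hl | |].
    by rewrite payY4; v4; field; rewrite ?nD.
  rewrite payX4; v4.
  move: ha; move: (p4 / (1 - p2 + p4)) => a /andP[ha0 ha1].
  have hSR : S < Rw by apply: lt_trans hRP.
  nra.
have hNash : nash_type T Rw P S (vec4 1 p2 p3 p4) <->
   (T - Rw) * p3 <= (1 - p2) * (Rw - S) /\ (T - Rw) * p4 <= (1 - p2) * (Rw - P).
  split.
    move=> [_ hN]; split.
      rewrite leNgt; apply/negP => hA.
      have hE : 0 < 1 + p3 - p2.
        have : 0 < (T - Rw) * p3 by apply: le_lt_trans _ hA; apply: mulr_ge0; lra.
        rewrite pmulr_rgt0 // => h3; lra.
      have [x0 [y [v [hx hy hl hY _]]]] := hspec hE.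
      have hD : 0 < 2 + p3 - p2 by lra.
      have hq : 0 < ((T - Rw) * p3 - (1 - p2) * (Rw - S)) / (2 + p3 - p2).
        by apply: divr_gt0 => //; rewrite subr_gt0.
      have := hN x0 y v hx hy hl; rewrite hY.
      move: hq; move: (_ / _) => t ht h; have := h (ltW _); lra.
    rewrite leNgt; apply/negP => hB.
    have hE : 0 < 1 - p2 + p4.
      have : 0 < (T - Rw) * p4 by apply: le_lt_trans _ hB; apply: mulr_ge0; lra.
      rewrite pmulr_rgt0 // => h4; lra.
    have [x0 [y [v [hx hy hl hY _]]]] := hiid hE.
    have hq : 0 < ((T - Rw) * p4 - (1 - p2) * (Rw - P)) / (1 - p2 + p4).
      by apply: divr_gt0 => //; rewrite subr_gt0.
    have := hN x0 y v hx hy hl; rewrite hY.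
    move: hq; move: (_ / _) => t ht h; have := h (ltW _); lra.
  move=> [hA hB]; split => //.
  move=> x0 y v hx hy hl hge.
  by have [] := hfacts x0 y v hx hy hl hA hB hge.
split => //.
split.
  move=> hG.
  have hN : nash_type T Rw P S (vec4 1 p2 p3 p4).
    case: hG => hag hG; split => // x0 y v hx hy hl hge.
    by have [] := hG x0 y v hx hy hl hge.
  have [hA hB] := hNash.1 hN.
  case: hG => _ hG.
  split.
    rewrite lt_neqAle hA andbT; apply/negP => /eqP hA0.
    have hp2 : p2 < 1.
      case: (ltrP p2 1) => h2 //.
      have e2 : p2 = 1 by apply: le_anti; rewrite hp21.
      exfalso; apply: hpp; rewrite e2 subrr mul0r in hA0 hB.
      have : (T - Rw) * p3 == 0 by rewrite hA0 ?mul0r.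
      rewrite mulf_eq0 (gt_eqF hTR') /= => /eqP e3.
      split => //; split => //; apply: le_anti; rewrite hp40 andbT.
      by rewrite -(pmulr_rle0 _ hTR'); move: hB; rewrite ?mul0r.
    have hE : 0 < 1 + p3 - p2 by lra.
    have [x0 [y [v [hx hy hl hY hX]]]] := hspec hE.
    have hY' : payY T Rw P S v = Rw by rewrite hY hA0 subrr mul0r addr0.
    have hge : Rw <= payY T Rw P S v by rewrite hY'.
    have [_ hX'] := hG x0 y v hx hy hl hge.
    have hD : 0 < 2 + p3 - p2 by lra.
    have hQ : p3 * (S - Rw) + (1 - p2) * (T - Rw) = 0.
      move: hX'; rewrite hX => h.
      have h0 : (p3 * (S - Rw) + (1 - p2) * (T - Rw)) / (2 + p3 - p2) = 0.
        by move: h; move: (_ / (2 + p3 - p2)) => t; lra.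
      by move/eqP: h0; rewrite mulf_eq0 invr_eq0 (gt_eqF hD) orbF => /eqP.
    set al := T - Rw in hA0 hQ hTR'; set be := Rw - S in hA0 hRS; set w := 1 - p2 in hA0 hQ.
    have hQ' : w * al = p3 * be by rewrite /be; lra.
    have hw : 0 < w by rewrite /w; lra.
    have hab : al < be by rewrite /al /be; lra.
    have e : w * (be * be - al * al) = be * (w * be) - al * (w * al) by ring.
    rewrite -hA0 hQ' in e.
    have e0 : w * (be * be - al * al) = 0 by rewrite e; ring.
    move/eqP: e0; rewrite mulf_eq0 (gt_eqF hw) /= subr_eq0 => /eqP e0.
    have : al * al < be * be by apply: ltr_pM => //; exact: ltW.
    by rewrite e0 ltxx.
  rewrite lt_neqAle hB andbT; apply/negP => /eqP hB0.
  have hp2 : p2 < 1.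
    case: (ltrP p2 1) => h2 //.
    have e2 : p2 = 1 by apply: le_anti; rewrite hp21.
    exfalso; apply: hpp; rewrite e2 subrr mul0r in hB0 hA.
    have : (T - Rw) * p4 == 0 by rewrite hB0 ?mul0r.
    rewrite mulf_eq0 (gt_eqF hTR') /= => /eqP e4.
    split => //; split => //; apply: le_anti; rewrite hp30 andbT.
    by rewrite -(pmulr_rle0 _ hTR'); move: hA; rewrite ?mul0r.
  have hE : 0 < 1 - p2 + p4 by lra.
  have [x0 [y [v [hx hy hl hY hX]]]] := hiid hE.
  have hY' : payY T Rw P S v = Rw by rewrite hY hB0 subrr mul0r addr0.
  have hge : Rw <= payY T Rw P S v by rewrite hY'.
  have [_ hX'] := hG x0 y v hx hy hl hge.
  by move: hX; rewrite hX' ltxx.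
move=> [hA hB]; split => // x0 y v hx hy hl hge.
have [h1 h2] := hfacts x0 y v hx hy hl (ltW hA) (ltW hB) hge.
by split => //; apply: h2.
Qed.
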